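(* Assume the standing setup below and let $\rho\ge 0$. Suppose $\mathcal{G}$ is a quasi-concave hill (QCH) and $\mathbf{x}\in\mathcal{NE}_\rho$. Then $u_i(\mathbf{x}_i)=u_j(\mathbf{x}_j)$ for all $i,j\in\mathrm{supp}(\mathbf{x})$.
   Context: Standing setup: $\mathcal{G}=(\mathcal{V},\mathcal{E})$ is a finite, connected, undirected graph; $\mathcal{N}^i$ denotes the set of neighbours of node $i$. For $\rho\ge0$, $\mathcal{S}_\rho=\{\mathbf{x}\in\mathbb{R}^{|\mathcal{V}|}:\mathbf{x}\ge 0,\ \sum_{i\in\mathcal{V}}\mathbf{x}_i=\rho\}$, and $\mathrm{supp}(\mathbf{x})=\{i:\mathbf{x}_i\neq 0\}$. For each node $i$, $p_i:[0,\infty)\to\mathbb{R}$ is twice continuously differentiable and strictly concave, and $u_i:=p_i'$ (right derivative at $0$), so each $u_i$ is strictly decreasing. The maximum payoff density parameter (MPDP) of node $i$ is $\mathbf{a}_i:=u_i(0)$. The set of Nash equilibria is $\mathcal{NE}_\rho=\{\mathbf{x}\in\mathcal{S}_\rho: u_i(\mathbf{x}_i)\ge u_j(\mathbf{x}_j)\ \forall j\in\mathcal{N}^i,\ \forall i\in\mathrm{supp}(\mathbf{x})\}$. A path $\pi(1),\dots,\pi(n)$ in $\mathcal{G}$ (distinct nodes, consecutive ones adjacent) is a path with quasi-concave MPDP's if for all $1\le k\le m\le l\le n$, $\mathbf{a}_{\pi(m)}\ge\min\{\mathbf{a}_{\pi(k)},\mathbf{a}_{\pi(l)}\}$. $\mathcal{G}$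 is a quasi-concave hill (QCH) if between every two distinct nodes there exists a path with quasi-concave MPDP's. *)

(* Defs.v *)
From HB Require Import structures.
From mathcomp Require Import all_boot all_order all_algebra.
From mathcomp Require Import all_classical all_reals all_analysis.
Set Implicit Arguments. Unset Strict Implicit. Unset Printing Implicit Defensive.
Import Order.TTheory GRing.Theory Num.Theory.
Import numFieldNormedType.Exports.
Local Open Scope classical_set_scope.
Local Open Scope ring_scope.

Definition undirected_connected_graph (T : finType) (adj : rel T) : Prop :=
  symmetric adj /\ irreflexive adj /\ (forall i j : T, connect adj i j).

(* A path pi(1),...,pi(n) is represented as x :: p, with x = pi(1):
   distinct nodes, consecutive ones adjacent. *)
Definition is_graph_path (T : finType) (adj : rel T) (x : T) (p : seq T) : Prop :=
  uniq (x :: p) /\ path adj x p.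

Definition quasi_concave_path (R : realType) (T : finType) (a : T -> R)
    (x : T) (p : seq T) : Prop :=
  forall k m l : nat, (k <= m)%N -> (m <= l)%N -> (l < size (x :: p))%N ->
    Num.min (a (nth x (x :: p) k)) (a (nth x (x :: p) l)) <= a (nth x (x :: p) m).

Definition QCH (R : realType) (T : finType) (adj : rel T) (a : T -> R) : Prop :=
  forall i j : T, i != j ->
    exists p : seq T, [/\ is_graph_path adj i p, last i p = j &
                          quasi_concave_path a i p].

Definition right_derivative (R : realType) (f : R -> R) (x0 l : R) : Prop :=
  (fun h : R => h^-1 * (f (x0 + h) - f x0)) @ 0^'+ --> l.

(* f : [0,oo) -> R is twice continuously differentiable, with first derivative
   u (one-sided at 0): f' = u and u' = u2 on (0,oo), right derivatives at 0,
   and u2 continuous on [0,oo). *)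
Definition C2_on_nonneg_with_deriv (R : realType) (f u : R -> R) : Prop :=
  exists u2 : R -> R,
    [/\ forall x : R, 0 < x -> is_derive x 1 f (u x) /\ is_derive x 1 u (u2 x),
        right_derivative f 0 (u 0),
        right_derivative u 0 (u2 0) &
        {within [set x : R | 0 <= x], continuous u2}].

Definition strictly_concave_nonneg (R : realType) (f : R -> R) : Prop :=
  forall x y t : R, 0 <= x -> 0 <= y -> x != y -> 0 < t -> t < 1 ->
    t * f x + (1 - t) * f y < f (t * x + (1 - t) * y).

Definition simplex (R : realType) (T : finType) (rho : R) (x : T -> R) : Prop :=
  (forall i, 0 <= x i) /\ \sum_(i : T) x i = rho.

Definition supp (R : realType) (T : finType) (x : T -> R) : {set T} :=
  [set i | x i != 0].

Definition NE (R : realType) (T : finType) (adj : rel T) (u : T -> R -> R)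
    (rho : R) (x : T -> R) : Prop :=
  simplex rho x /\
  forall i, i \in supp x -> forall j, adj i j -> u j (x j) <= u i (x i).

(* Main.v *)
Require Import Defs.
From HB Require Import structures.
From mathcomp Require Import all_boot all_order all_algebra.
From mathcomp Require Import all_classical all_reals all_analysis.
From mathcomp Require Import ring lra.
Import Order.TTheory GRing.Theory Num.Theory.
Import numFieldNormedType.Exports.
Local Open Scope classical_set_scope.
Local Open Scope ring_scope.

Section An.
Variable R : realType.

Lemma key3 (f : R -> R) a b c : strictly_concave_nonneg f -> 0 <= a -> a < b -> b < c ->
  (f c - f b) * (b - a) < (f b - f a) * (c - b).
Proof.
move=> sc a0 ab bc.
have ca : 0 < c - a by lra.
have t0 : 0 < (c - b) / (c - a) by rewrite divr_gt0 //; lra.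
have t1 : (c - b) / (c - a) < 1 by rewrite ltr_pdivrMr //; lra.
have := sc a c ((c - b) / (c - a)) a0 ltac:(lra) ltac:(apply/eqP => H; lra) t0 t1.
have -> : (c - b) / (c - a) * a + (1 - (c - b) / (c - a)) * c = b.
  by field; apply/eqP => H; lra.
have -> : 1 - (c - b) / (c - a) = (b - a) / (c - a).
  by field; apply/eqP => H; lra.
move=> H.
have H2 : (c - b) * f a + (b - a) * f c < (c - a) * f b.
  have := H; rewrite -(ltr_pM2l ca) mulrDr !mulrA.
  by rewrite !(mulrC (c - a)) !mulrK ?unitfE //; apply/eqP => E; lra.
nra.
Qed.

Lemma rd_at (f : R -> R) (y l : R) : is_derive y 1 f l -> right_derivative f y l.
Proof.
move=> [df dv].
rewrite /right_derivative.
have h1 : (fun h : R => h^-1 *: ((f \o shift y) (h *: 1) - f y)) @ 0^' --> l.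
  by rewrite -dv; exact: df.
have le : (0:R)^'+ `=>` (0:R)^'.
  move=> P [e e0 He]; exists e => // z zb z0; apply: He => //.
  by rewrite gt_eqF.
have := cvg_trans (cvg_app _ le) h1.
apply: cvg_trans; apply: near_eq_cvg; near=> h.
rewrite /=. have -> : h *: (1:R^o) = h by rewrite -[RHS]mulr1. by rewrite (addrC h).
Unshelve. all: by end_near.
Qed.

Arguments key3 {f a b c}.
Arguments rd_at {f y l}.
Lemma u_lt0 (f u : R -> R) (y : R) : C2_on_nonneg_with_deriv f u ->
  strictly_concave_nonneg f -> 0 < y -> u y < u 0.
Proof.
case=> u2 [Hd Hr0 _ _] sc y0.
have Hry := rd_at (Hd y y0).1.
set z := y / 2.
have z0 : 0 < z by rewrite /z divr_gt0.
have yz : y - z = z by rewrite /z; field.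
have zy : z < y by rewrite /z; lra.
set s1 := (f z - f 0) / z.
set s2 := (f y - f z) / z.
have s21 : s2 < s1.
  have := key3 sc (lexx 0) z0 zy; rewrite yz subr0 => H.
  by rewrite /s1 /s2 ltr_pM2r ?invr_gt0 //; nra.
have A : s1 <= u 0.
  rewrite -(cvg_lim _ Hr0); last exact: Rhausdorff.
  apply: limr_ge; first exact: (cvgP _ Hr0).
  near=> h.
  have h0 : 0 < h by near: h; exact: nbhs_right_gt.
  have hz : h < z by near: h; exact: nbhs_right_lt.
  have := key3 sc (lexx 0) h0 hz => H.
  rewrite add0r -subr_ge0.
  have -> : h^-1 * (f h - f 0) - s1 = ((f h - f 0) * z - (f z - f 0) * h) / (h * z).
    by rewrite /s1; field; apply/andP; split; apply/eqP => E; lra.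
  apply: divr_ge0; last by nra.
  nra.
have B : u y <= s2.
  rewrite -(cvg_lim _ Hry); last exact: Rhausdorff.
  apply: limr_le; first exact: (cvgP _ Hry).
  near=> h.
  have h0 : 0 < h by near: h; exact: nbhs_right_gt.
  have yh : y < y + h by lra.
  have := key3 sc (ltW z0) zy yh; rewrite yz => H.
  rewrite -subr_ge0.
  have -> : s2 - h^-1 * (f (y + h) - f y) = ((f y - f z) * h - (f (y + h) - f y) * z) / (h * z).
    by rewrite /s2; field; apply/andP; split; apply/eqP => E; lra.
  apply: divr_ge0; last by nra.
  have E : y + h - y = h by ring.
  rewrite E in H; nra.
lra.
Unshelve. all: by end_near.
Qed.

End An.

Theorem mainTheorem2 (R : realType) (T : finType) (adj : rel T)
    (p u : T -> R -> R) (rho : R) (x : T -> R) :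
  undirected_connected_graph adj ->
  (forall i : T, C2_on_nonneg_with_deriv (p i) (u i)) ->
  (forall i : T, strictly_concave_nonneg (p i)) ->
  0 <= rho ->
  QCH adj (fun i => u i 0) ->
  NE adj u rho x ->
  forall i j : T, i \in supp x -> j \in supp x -> u i (x i) = u j (x j).
Proof.
move=> [asym _] Hc2 Hsc _ Hq [[xge _] Hne] i j iS jS.
have inS k : (k \in supp x) = (x k != 0) by rewrite /supp inE.
have ltA k : k \in supp x -> u k (x k) < u k 0.
  move=> kS; apply: (@u_lt0 R _ _ _ (Hc2 k) (Hsc k)).
  by rewrite lt_def -inS kS xge.
have nS k : k \notin supp x -> x k = 0 by rewrite inS negbK => /eqP.
have [->|nij] := eqVneq i j; first by [].
have [q [[_ pth] lst qc]] := Hq i j nij.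
set s := i :: q.
set N := fun m => nth i s m.
have Adj m : (m.+1 < size s)%N -> adj (N m) (N m.+1).
  by move=> hm; move/(pathP i): pth => /(_ m hm).
have N0 : N 0%N = i by [].
have Nl : N (size q) = j by rewrite -lst; exact: (nth_last i (i :: q)).
have allS m : (m < size s)%N -> N m \in supp x.
  move=> mlt; apply/negPn/negP => mnS.
  pose P k := (k < size s)%N && (N k \notin supp x).
  have exP : exists k, P k by exists m; rewrite /P mlt mnS.
  have ubP k : P k -> (k <= size s)%N by case/andP => /ltnW.
  case: (ex_minnP exP) => t /andP [tlt tnS] tmin.
  case: (ex_maxnP exP ubP) => t' /andP [t'lt t'nS] tmax.
  have tt' : (t <= t')%N by apply: tmax; rewrite /P tlt tnS.
  have t0 : (0 < t)%N.
    by case: t tlt tnS {tmin tt'} => [|t] //; rewrite N0 iS.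
  have t'l : (t'.+1 < size s)%N.
    rewrite ltn_neqAle t'lt andbT; apply/negP => /eqP E.
    have E' : t' = size q by case: E.
    by move: t'nS; rewrite E' Nl jS.
  have Sm : N t.-1 \in supp x.
    apply/negPn/negP => H.
    have := tmin t.-1; rewrite /P H andbT (leq_ltn_trans (leq_pred t) tlt).
    by move/(_ isT); rewrite leqNgt ltn_predL t0.
  have Sp : N t'.+1 \in supp x.
    apply/negPn/negP => H.
    by have := tmax t'.+1; rewrite /P H andbT t'l => /(_ isT); rewrite ltnn.
  have a1 : u (N t) 0 < u (N t.-1) 0.
    have Ad : adj (N t.-1) (N t) by have := Adj t.-1; rewrite prednK //; apply.
    have H := Hne _ Sm _ Ad; rewrite (nS _ tnS) in H.
    exact: le_lt_trans H (ltA _ Sm).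
  have a2 : u (N t') 0 < u (N t'.+1) 0.
    have := Hne _ Sp (N t'); rewrite asym => /(_ (Adj _ t'l)).
    rewrite (nS _ t'nS) => H.
    exact: le_lt_trans H (ltA _ Sp).
  have q1 := qc t.-1 t t'.+1 (leq_pred t) (leqW tt') t'l.
  have q2 := qc t.-1 t' t'.+1 (leq_trans (leq_pred t) tt') (leqnSn t') t'l.
  rewrite -/s -/(N _) -/(N t) -/(N t') in q1 q2.
  rewrite !(@ge_min _ R) in q1 q2.
  case/orP: q1 => h1.
    by move: (lt_le_trans a1 h1); rewrite ltxx.
  case/orP: q2 => h2.
    by move: (lt_le_trans a2 (le_trans h1 (le_trans (ltW a1) h2))); rewrite ltxx.
  by move: (lt_le_trans a2 h2); rewrite ltxx.
have chain m : (m < size s)%N -> u (N m) (x (N m)) = u i (x i).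
  elim: m => [|m IH] hm; first by [].
  rewrite -IH ?(ltnW hm) //.
  have Sa := allS m (ltnW hm).
  have Sb := allS m.+1 hm.
  apply/le_anti/andP; split.
    exact: Hne _ Sa _ (Adj m hm).
  by apply: Hne _ Sb _ _; rewrite asym; exact: Adj m hm.
by rewrite -Nl chain.
Qed.
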